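(* Let $m \geq 4$ be an integer with $m \equiv 0 \pmod 4$, and let $(\boldsymbol{x}_n)_{0 \leq n < 2^m}$ be a $(0,m,2)$-net in base $2$ such that $\boldsymbol{x}_0 = \boldsymbol{\gamma} = (\gamma^{(1)},\gamma^{(2)})$, where \[ \gamma^{(1)} = \frac{1}{2^2} + \frac{1}{2^4}+ \cdots + \frac{1}{2^{m/2}}, \qquad \gamma^{(2)} = \frac{1}{2^{m/2+2}} + \frac{1}{2^{m/2+4}} + \cdots + \frac{1}{2^m}. \] Put $N = 2^m$. Then for the interval $J_{\boldsymbol{\gamma}} = [0,\gamma^{(1)}) \times [0,\gamma^{(2)})$ one has \[ \frac{1}{N} \Delta (\boldsymbol{\gamma},(\boldsymbol{x}_n)_{0 \leq n < 2^m}) \leq -\frac{1}{4} \cdot \frac{1}{2^{m+2}}\, m, \] and consequently \[ D^{*}((\boldsymbol{x}_n)_{0 \leq n < N}) \geq \frac{1}{16 \log 2} \frac{\log N}{N}. \]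
   Context: For integers $b \geq 2$, $s \geq 1$, $0 \leq t \leq m$, a $(t,m,s)$-net in base $b$ is a set (family) of $b^m$ points $\boldsymbol{x}_0,\dots,\boldsymbol{x}_{b^m-1}$ in $[0,1)^s$ such that every interval of the form $\prod_{i=1}^s [a_i b^{-d_i}, (a_i+1) b^{-d_i})$ with $d_i \in \mathbb{N}_0$, $a_i \in \{0,\dots,b^{d_i}-1\}$ and volume $b^{-m+t}$ contains exactly $b^t$ of the points. For a finite family of points $(\boldsymbol{x}_n)_{n}$ in $[0,1)^s$ and $\boldsymbol{y} = (y^{(1)},\dots,y^{(s)}) \in [0,1]^s$, the discrepancy function is $\Delta(\boldsymbol{y},(\boldsymbol{x}_n)_n) = \sum_{n} \big(\chi_{[\boldsymbol{0},\boldsymbol{y})}(\boldsymbol{x}_n) - y^{(1)}\cdots y^{(s)}\big)$, where $[\boldsymbol{0},\boldsymbol{y}) = [0,y^{(1)})\times\cdots\times[0,y^{(s)})$ and $\chi$ denotes the indicator function; the star-discrepancy of an $N$-point family is $D^*((\boldsymbol{x}_n)_n) = \sup_{\boldsymbol{y} \in [0,1)^s} \big| \frac{1}{N}\Delta(\boldsymbol{y},(\boldsymbol{x}_n)_n)\big|$. $\log$ denotes the natural logarithm. *)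

(* Defs.v *)
From HB Require Import structures.
From mathcomp Require Import all_boot all_order all_algebra.
From mathcomp Require Import all_classical all_reals all_analysis.
Unset Printing Implicit Defensive.
Import Order.TTheory GRing.Theory Num.Theory.
Local Open Scope ring_scope.

(* A point of [0,1)^s (or R^s) is a function 'I_s -> R.  A finite family of
   N points is a sequence x : nat -> ('I_s -> R), of which only the entries
   x 0, ..., x (N-1) are used. *)

Definition in_elem_interval {R : realType} (s b : nat) (d a : 'I_s -> nat)
    (p : 'I_s -> R) : bool :=
  [forall i, ((a i)%:R / (b ^ d i)%:R <= p i) && (p i < (a i).+1%:R / (b ^ d i)%:R)].

Definition is_tms_net {R : realType} (t m s b : nat) (x : nat -> 'I_s -> R) : Prop :=
  [/\ (2 <= b)%N, (1 <= s)%N, (t <= m)%N,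
      (forall n : nat, (n < b ^ m)%N -> forall i, 0 <= x n i < 1) &
      (forall d a : 'I_s -> nat, (\sum_(i < s) d i)%N = (m - t)%N ->
         (forall i, a i < b ^ d i)%N ->
         #|[pred n : 'I_(b ^ m) | @in_elem_interval R s b d a (x n)]| = (b ^ t)%N)].

Definition in_anchored_box {R : realType} (s : nat) (y p : 'I_s -> R) : bool :=
  [forall i, (0 <= p i) && (p i < y i)].

Definition discr_fun {R : realType} (s N : nat) (y : 'I_s -> R)
    (x : nat -> 'I_s -> R) : R :=
  \sum_(n < N) ((@in_anchored_box R s y (x n))%:R - \prod_(i < s) y i).

Definition star_discr {R : realType} (s N : nat) (x : nat -> 'I_s -> R) : R :=
  sup [set r : R | exists y : 'I_s -> R,
         (forall i, 0 <= y i < 1) /\ r = `| @discr_fun R s N y x / N%:R |].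

Definition gamma1 {R : realType} (m : nat) : R :=
  \sum_(1 <= k < (m %/ 4).+1) ((2 ^ (2 * k))%:R)^-1.
Definition gamma2 {R : realType} (m : nat) : R :=
  \sum_(1 <= k < (m %/ 4).+1) ((2 ^ (m %/ 2 + 2 * k))%:R)^-1.

Definition gammapt {R : realType} (m : nat) : 'I_2 -> R :=
  fun i => if i == ord0 then gamma1 m else gamma2 m.

(* Main.v *)
Require Import Defs.
From HB Require Import structures.
From mathcomp Require Import all_boot all_order all_algebra.
From mathcomp Require Import all_classical all_reals all_analysis.
From mathcomp Require Import zify ring lra.
Import Order.TTheory GRing.Theory Num.Theory.
Local Open Scope ring_scope.
Local Open Scope nat_scope.

Fixpoint hh (c : nat) : nat := if c is c'.+1 then 4 * hh c' + 1 else 0.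

Lemma hh_pow c : 3 * hh c + 1 = 4 ^ c.
Proof. elim: c => [|c IH] //=; rewrite expnS; lia. Qed.

Lemma hhD c e : hh (e + c) = 4 ^ e * hh c + hh e.
Proof. elim: e => [|e IH] /=; first by rewrite mul1n addn0.
rewrite IH expnS; lia. Qed.

Lemma hh_lt c : hh c < 4 ^ c.
Proof. have := hh_pow c; lia. Qed.

Lemma hh_div c e : hh (e + c) %/ 4 ^ e = hh c.
Proof. rewrite hhD mulnC divnMDl ?expn_gt0 // divn_small ?addn0 //; exact: hh_lt. Qed.

Lemma hh_div2 c e : 0 < e -> hh (e + c) %/ 2 ^ (2 * e - 1) = 2 * hh c.
Proof.
move=> e0; have E : 4 ^ e = 2 * 2 ^ (2 * e - 1).
  rewrite -expnS (_ : (2 * e - 1).+1 = 2 * e); last lia.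
  by rewrite expnM.
rewrite hhD E -mulnA [2 * _]mulnC -mulnA mulnC divnMDl ?expn_gt0 // divn_small ?addn0 //.
  by rewrite mulnC.
have := hh_pow e; rewrite E => H; have : 0 < 2 ^ (2 * e - 1) by rewrite expn_gt0. lia.
Qed.

Lemma hh_split q X : X < hh q -> exists2 c, c < q & X %/ 4 ^ c = 4 * hh (q - c.+1).
Proof.
elim: q X => [|q IH] X //= HX.
have [Y|Y] := ltnP (X %/ 4) (hh q).
  have [c cq Hc] := IH _ Y; exists c.+1; first by [].
  by rewrite expnS divnMA Hc subSS.
exists 0; first by [].
rewrite expn0 divn1 subn1 /=.
have : X %/ 4 <= hh q by rewrite leq_divLR //; lia.
have := leq_trunc_div X 4; have := ltn_ceil X (isT : 0 < 4).
lia.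
Qed.

Lemma hh_sum q : 3 * (\sum_(c < q) hh c) + q = hh q.
Proof. elim: q => [|q IH]; first by rewrite big_ord0.
rewrite big_ord_recr /=; move: IH; set S := (\sum_(_ < q) hh _); lia. Qed.

Lemma hh_div3 q c : c < q -> hh q %/ 2 ^ (2 * c + 1) = 2 * hh (q - c.+1).
Proof.
move=> cq; rewrite expnD expnM (_ : 2 ^ 2 = 4) // divnMA.
rewrite (_ : hh q = hh (c + (q - c))); last by congr hh; lia.
rewrite hh_div.
rewrite (_ : q - c = (q - c.+1).+1); last lia.
rewrite /=; set h := hh _; lia.
Qed.

Lemma hh_lt2 e : 2 * hh e < 2 ^ (2 * e).+1.
Proof. rewrite expnS expnM (_ : 2 ^ 2 = 4) //; have := hh_lt e; lia. Qed.

Lemma nat_final q C : 1 <= q -> 3 * C + q = hh q ->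
  4 * 4 ^ q * C + q * 4 ^ q <= 4 * hh q ^ 2.
Proof.
move=> q1 HC; have HF := hh_pow q.
have [q1'|q2] := eqVneq q 1.
  subst q; move: HC; rewrite /= => HC; have -> : C = 0 by lia. by [].
have q2' : 2 <= q by lia.
set G := hh q in HC HF *; set F := 4 ^ q in HF *.
have E1 : 3 * (4 * F * C + q * F) + q * F = 4 * G * F.
  by rewrite -HC; ring.
have E2 : 4 * G <= q * F.
  rewrite -HF; have : 2 * (3 * G + 1) <= q * (3 * G + 1) by apply: leq_mul.
  lia.
have E3 : 4 * G * F = 12 * G ^ 2 + 4 * G by rewrite -HF; ring.
lia.
Qed.

Lemma sum_bool_card (T : finType) (P : pred T) : (\sum_(i : T) (P i : nat) = #|P|)%N.
Proof. rewrite -sum1_card [RHS]big_mkcond /=; apply: eq_bigr => i _; by rewrite unfold_in; case: (P i). Qed.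
Lemma sum_one n : (\sum_(k < n) 1 = n)%N.
Proof. by rewrite big_const_ord iter_addn_0 mul1n. Qed.

Local Close Scope nat_scope.

Lemma ord2E (i : 'I_2) : i = ord0 \/ i = ord_max.
Proof. by case: i => [[|[|i]] Hi]; [left|right|]; try apply: val_inj. Qed.

Section Reals.
Variable R : realType.

Definition T (d : nat) (z : R) : nat := Num.truncn (z * (2 ^ d)%:R).

Lemma p2gt0 d : 0 < (2 ^ d)%:R :> R.
Proof. by rewrite ltr0n expn_gt0. Qed.

Lemma T_eq z d a : 0 <= z ->
  (T d z = a) <-> (a%:R / (2 ^ d)%:R <= z < a.+1%:R / (2 ^ d)%:R).
Proof.
move=> z0; rewrite ler_pdivrMr ?p2gt0 // ltr_pdivlMr ?p2gt0 //.
rewrite -truncn_eq ?mulr_ge0 ?ler0n //; split; [by move=> <- | by move/eqP].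
Qed.

Lemma T_lt z d c : 0 <= z -> z < c%:R / (2 ^ d)%:R -> (T d z < c)%N.
Proof. by move=> z0; rewrite ltr_pdivlMr ?p2gt0 // /T truncn_lt_nat ?mulr_ge0 ?ler0n. Qed.

Lemma T_nat d c : T d (c%:R / (2 ^ d)%:R) = c.
Proof. by rewrite /T mulfVK ?natrK // gt_eqF ?p2gt0. Qed.

Lemma T_div z d e : 0 <= z -> T d z = (T (d + e) z %/ 2 ^ e)%N.
Proof.
move=> z0; have [/andP [H1 H2]] := truncn_itv (mulr_ge0 z0 (ler0n R (2 ^ (d + e)))).
rewrite /T; set k := Num.truncn _ in H1 H2 *.
apply: truncn_def.
have e0 : 0 < (2 ^ e)%:R :> R by apply: p2gt0.
have Ek : z * (2 ^ (d + e))%:R = z * (2 ^ d)%:R * (2 ^ e)%:R by rewrite expnD natrM mulrA.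
rewrite Ek in H1 H2.
apply/andP; split.
  rewrite -(ler_pM2r e0) -natrM; apply: le_trans H1; rewrite ler_nat.
  exact: leq_trunc_div.
rewrite -(ltr_pM2r e0) -natrM; apply: lt_le_trans H2 _; rewrite ler_nat.
by apply: ltn_ceil; rewrite expn_gt0.
Qed.

Lemma gsum q :
  \sum_(1 <= k < q.+1) ((2 ^ (2 * k))%:R : R)^-1 = (hh q)%:R / (2 ^ (2 * q))%:R.
Proof.
elim: q => [|q IH]; first by rewrite big_geq // mul0r.
rewrite big_nat_recr //= IH.
rewrite !natrX /= (_ : (2 * q.+1 = (2 * q).+2)%N); last lia.
rewrite natrD natrM !exprS.
have : (2 : R) ^+ (2 * q) != 0 by rewrite expf_neq0 // pnatr_eq0.
move=> H; field; rewrite H /=; lra.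
Qed.

Lemma gamma1E q : gamma1 (4 * q) = (hh q)%:R / (2 ^ (2 * q))%:R :> R.
Proof. by rewrite /gamma1 mulKn // gsum. Qed.

Lemma gamma2E q : gamma2 (4 * q) = (hh q)%:R / (2 ^ (4 * q))%:R :> R.
Proof.
rewrite /gamma2 mulKn // (_ : (4 * q) %/ 2 = 2 * q)%N; last first.
  by rewrite (_ : 4 * q = 2 * (2 * q))%N ?mulKn ?mulnA.
under eq_bigr do rewrite expnD natrM invfM.
rewrite -mulr_sumr gsum (_ : 4 * q = 2 * q + 2 * q)%N; last lia.
by rewrite expnD natrM invfM mulrCA.
Qed.


Lemma elem2 (d a : 'I_2 -> nat) (p : 'I_2 -> R) :
  0 <= p ord0 -> 0 <= p ord_max ->
  T (d ord0) (p ord0) = a ord0 -> T (d ord_max) (p ord_max) = a ord_max ->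
  in_elem_interval 2 2 d a p.
Proof.
move=> h0 h1 e0 e1; apply/forallP => i.
by case: (ord2E i) => ->; [move/T_eq: e0 | move/T_eq: e1]; apply.
Qed.

Arguments T_lt {z d c}.
Arguments T_div {z d} e.
Lemma key q (x1 x2 : R) : 0 <= x1 -> 0 <= x2 ->
  x1 < (hh q)%:R / (2 ^ (2 * q))%:R -> x2 < (hh q)%:R / (2 ^ (4 * q))%:R ->
  (forall c, (c < q)%N -> T (2 * (q - c) - 1) x1 = (2 * hh (q - c.+1))%N ->
      T (2 * q + 2 * c + 1) x2 = (2 * hh c)%N -> False) ->
  exists2 c, (c < q)%N & T (2 * (q - c)) x1 = (4 * hh (q - c.+1))%N /\
                       (T (2 * q + 2 * c) x2 < hh c)%N.
Proof.
move=> h1 h2 l1 l2 U.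
have XL := T_lt h1 l1; have YL := T_lt h2 l2.
set X := T (2 * q) x1 in XL; set Y := T (4 * q) x2 in YL.
have [c cq Hc] := hh_split _ _ XL.
exists c => //.
have E1 : T (2 * (q - c)) x1 = (4 * hh (q - c.+1))%N.
  rewrite (T_div (2 * c) h1) (_ : 2 * (q - c) + 2 * c = 2 * q)%N; last lia.
  by rewrite expnM.
split => //.
have E2 : T (2 * q + 2 * c) x2 = (Y %/ 2 ^ (2 * (q - c)))%N.
  rewrite (T_div (2 * (q - c)) h2) (_ : 2 * q + 2 * c + 2 * (q - c) = 4 * q)%N //; lia.
have hq : hh q = hh ((q - c) + c) by rewrite subnK // ltnW.
have Le : (T (2 * q + 2 * c) x2 <= hh c)%N.
  rewrite E2 -(hh_div c (q - c)) -hq expnM (_ : (2 ^ 2 = 4)%N) //; apply: leq_div2r; exact: ltnW.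
rewrite ltn_neqAle Le andbT; apply/negP => /eqP Eq.
apply: (U c cq).
  rewrite (T_div 1 h1) (_ : 2 * (q - c) - 1 + 1 = 2 * (q - c))%N; last lia.
  rewrite E1 (_ : 4 * hh (q - c.+1) = 2 * hh (q - c.+1) * 2)%N ?mulnK //; lia.
have E3 : T (2 * q + 2 * c + 1) x2 = (Y %/ 2 ^ (2 * (q - c) - 1))%N.
  rewrite (T_div (2 * (q - c) - 1) h2).
  rewrite (_ : 2 * q + 2 * c + 1 + (2 * (q - c) - 1) = 4 * q)%N //; lia.
have Le3 : (T (2 * q + 2 * c + 1) x2 <= 2 * hh c)%N.
  rewrite E3 -(hh_div2 c (q - c)) -?hq; last lia.
  apply: leq_div2r; exact: ltnW.
have Ge3 : (2 * hh c <= T (2 * q + 2 * c + 1) x2)%N.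
  move: Eq; rewrite (T_div 1 h2).
  set t := T _ x2 => Eq.
  have := leq_trunc_div t 2; rewrite -Eq; lia.
by apply/eqP; rewrite eqn_leq Le3 Ge3.
Qed.

Lemma discr_bound (N : nat) (y : 'I_2 -> R) (x : nat -> 'I_2 -> R) :
  (forall i, 0 <= y i < 1) -> `|discr_fun 2 N y x| <= N%:R.
Proof.
move=> Hy; rewrite /discr_fun; apply: le_trans (ler_norm_sum _ _ _) _.
have H n : `|(in_anchored_box 2 y (x n))%:R - \prod_(i < 2) y i| <= 1 :> R.
  rewrite big_ord_recl big_ord1.
  have /andP [a0 a1] := Hy ord0; have /andP [b0 b1] := Hy (lift ord0 ord0).
  rewrite ler_norml; case: (in_anchored_box 2 y (x n)) => /=; apply/andP; split; nra.
apply: le_trans (ler_sum _ (fun (n : 'I_N) _ => H n)) _.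
by rewrite sumr_const card_ord.
Qed.

Lemma final_ineq (c C G F q : R) : 0 < F -> c <= C -> 4 * F * C + q * F <= 4 * G ^+ 2 ->
  (c - G / F * (G / (F * F)) * (F * F)) / (F * F) <= - (1 / 4) / (F * F * 4) * (4 * q).
Proof.
move=> F0 cC key.
have FF : 0 < F * F by apply: mulr_gt0.
rewrite ler_pdivrMr //.
have -> : - (1 / 4) / (F * F * 4) * (4 * q) * (F * F) = - q / 4.
  by field; rewrite gt_eqF.
have -> : G / F * (G / (F * F)) * (F * F) = (G ^+ 2 - F * c - q * F / 4) / F + c + q / 4.
  by field; rewrite gt_eqF.
have : 0 <= (G ^+ 2 - F * c - q * F / 4) / F.
  apply: divr_ge0; last exact: ltW.
  have : F * c <= F * C by rewrite ler_pM2l.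
  lra.
lra.
Qed.

End Reals.
Arguments T {R}.
Arguments T_div {R z d} e.
Arguments T_nat {R}.

Theorem theorem3 (R : realType) (m : nat) (x : nat -> 'I_2 -> R) :
  (4 <= m)%N -> (4 %| m)%N ->
  @is_tms_net R 0 m 2 2 x ->
  x 0%N = gammapt m ->
  @discr_fun R 2 (2 ^ m) (gammapt m) x / (2 ^ m)%:R
    <= - (1 / 4) * ((2 ^ (m + 2))%:R)^-1 * m%:R
  /\ @star_discr R 2 (2 ^ m) x
    >= (16 * ln (2 : R))^-1 * (ln ((2 ^ m)%:R : R) / (2 ^ m)%:R).
Proof.
move=> m4 /dvdnP [q Hm] net x0.
have Hm' : m = (4 * q)%N by rewrite Hm mulnC.
clear Hm; subst m.
have q1 : (1 <= q)%N by lia.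
case: net => _ _ _ Hrng Hcnt.
have g0 : gammapt (4 * q) ord0 = (hh q)%:R / (2 ^ (2 * q))%:R :> R by rewrite /gammapt /= gamma1E.
have g1 : gammapt (4 * q) ord_max = (hh q)%:R / (2 ^ (4 * q))%:R :> R by rewrite /gammapt /= gamma2E.
have N0 : (0 < 2 ^ (4 * q))%N by rewrite expn_gt0.
pose z0 : 'I_(2 ^ (4 * q)) := Ordinal N0.
have Hr n : (n < 2 ^ (4 * q))%N -> 0 <= x n ord0 /\ 0 <= x n ord_max.
  by move=> Hn; have /andP [? _] := Hrng n Hn ord0; have /andP [? _] := Hrng n Hn ord_max.
have U1 c : (c < q)%N -> forall n : 'I_(2 ^ (4 * q)),
    T (2 * (q - c) - 1)%N (x n ord0) = (2 * hh (q - c.+1))%N ->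
    T (2 * q + 2 * c + 1)%N (x n ord_max) = (2 * hh c)%N -> n = z0.
  move=> cq n E1 E2.
  pose d := fun i : 'I_2 => if i == ord0 then (2 * (q - c) - 1)%N else (2 * q + 2 * c + 1)%N.
  pose a := fun i : 'I_2 => if i == ord0 then (2 * hh (q - c.+1))%N else (2 * hh c)%N.
  have C1 := Hcnt d a.
  have Sd : (\sum_(i < 2) d i)%N = (4 * q - 0)%N.
    rewrite big_ord_recl big_ord1 /d /=; lia.
  have Ba : forall i, (a i < 2 ^ d i)%N.
    move=> i; case: (ord2E i) => ->; rewrite /a /d /=.
      rewrite (_ : (2 * (q - c) - 1 = (2 * (q - c.+1)).+1)%N); last lia.
      exact: hh_lt2.
    apply: leq_trans (hh_lt2 c) _; rewrite leq_pexp2l //; lia.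
  have {}C1 := C1 Sd Ba.
  have P0 : in_elem_interval 2 2 d a (x z0).
    have [h0 h1] := Hr 0%N N0.
    rewrite /= x0 in h0 h1 *; apply: elem2 => //=.
      rewrite /d /a /= g0 (T_div (2 * c + 1)%N); last by rewrite -g0.
      have -> : (2 * (q - c) - 1 + (2 * c + 1) = 2 * q)%N by lia.
      by rewrite T_nat hh_div3.
    rewrite /d /a /= g1 (T_div (2 * (q - c) - 1)%N); last by rewrite -g1.
    have -> : (2 * q + 2 * c + 1 + (2 * (q - c) - 1) = 4 * q)%N by lia.
    rewrite T_nat (_ : hh q = hh ((q - c) + c)); last by congr hh; lia.
    apply: hh_div2; lia.
  have Pn : in_elem_interval 2 2 d a (x n).
    have [h0' h1'] := Hr n (ltn_ord n).
    by apply: elem2.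
  have := card_le1P (eq_leq C1) z0 P0 n.
  rewrite !inE Pn => /esym /eqP; done.
pose dd c := fun i : 'I_2 => if i == ord0 then (2 * (q - c))%N else (2 * q + 2 * c)%N.
pose aa c k := fun i : 'I_2 => if i == ord0 then (4 * hh (q - c.+1))%N else k.
have Cnt c k : (c < q)%N -> (k < hh c)%N ->
    (#|[pred n : 'I_(2 ^ (4 * q)) | in_elem_interval 2 2 (dd c) (aa c k) (x n)]| = 1)%N.
  move=> cq kc; apply: Hcnt.
    rewrite big_ord_recl big_ord1 /dd /=; lia.
  move=> i; case: (ord2E i) => ->; rewrite /aa /dd /=.
    rewrite (_ : (2 * (q - c) = (2 * (q - c.+1)).+2)%N); last lia.
    rewrite expnS expnS expnM (_ : (2 ^ 2 = 4)%N) //; have := hh_lt (q - c.+1); lia.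
  have : (4 ^ c <= 2 ^ (2 * q + 2 * c))%N.
    rewrite (_ : (4 = 2 ^ 2)%N) // -expnM leq_pexp2l //; lia.
  have := hh_lt c; lia.
have Pw (n : 'I_(2 ^ (4 * q))) : ((in_anchored_box 2 (gammapt (4 * q)) (x n) : nat) <=
    \sum_(c < q) \sum_(k < hh c) (in_elem_interval 2 2 (dd c) (aa c k) (x n) : nat))%N.
  case Hb: in_anchored_box => //.
  have := forallP Hb ord0; have := forallP Hb ord_max.
  rewrite g0 g1 => /andP [h1 l1] /andP [h0 l0].
  have nz : n != z0.
    apply/negP => /eqP En; move: l0; rewrite En /= x0 g0 ltxx //.
  have U : forall c, (c < q)%N -> T (2 * (q - c) - 1)%N (x n ord0) = (2 * hh (q - c.+1))%N ->
      T (2 * q + 2 * c + 1)%N (x n ord_max) = (2 * hh c)%N -> False.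
    by move=> c cq e1 e2; move/negP: nz; apply; apply/eqP; apply: U1 cq n e1 e2.
  have [c cq [E1 E2]] := @key R q _ _ h0 h1 l0 l1 U.
  have Hel : in_elem_interval 2 2 (dd c) (aa c (T (2 * q + 2 * c)%N (x n ord_max))) (x n).
    by apply: elem2.
  rewrite (bigD1 (Ordinal cq)) //= (bigD1 (Ordinal E2 : 'I_(hh (Ordinal cq)))) //= Hel /=.
  by rewrite -addnA leq_addr.
have Tot : (\sum_(n < 2 ^ (4 * q)) (in_anchored_box 2 (gammapt (4 * q)) (x n) : nat)
    <= \sum_(c < q) hh c)%N.
  apply: (@leq_trans (\sum_(n < 2 ^ (4 * q)) \sum_(c < q) \sum_(k < hh c) (in_elem_interval 2 2 (dd c) (aa c k) (x n) : nat))); first by apply: leq_sum => n _; apply: Pw.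
  rewrite exchange_big /=; apply: leq_sum => c _.
  rewrite exchange_big /=.
  rewrite (eq_bigr (fun _ => 1%N)) ?sum_one // => k _.
  by rewrite sum_bool_card; apply: Cnt.
have gp : \prod_(i < 2) gammapt (4 * q) i
    = (hh q)%:R / (2 ^ (2 * q))%:R * ((hh q)%:R / (2 ^ (4 * q))%:R) :> R.
  by rewrite big_ord_recl big_ord1 /gammapt /= gamma1E gamma2E.
set cnt := (\sum_(n < _) _)%N in Tot.
have DE : discr_fun 2 (2 ^ (4 * q)) (gammapt (4 * q)) x = cnt%:R -
    ((hh q)%:R / (2 ^ (2 * q))%:R * ((hh q)%:R / (2 ^ (4 * q))%:R)) *+ 2 ^ (4 * q) :> R.
  by rewrite /discr_fun sumrB natr_sum sumr_const card_ord gp.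
have HC := hh_sum q; have NF := nat_final _ _ q1 HC.
set F : R := (4 ^ q)%:R.
have F0 : 0 < F by rewrite ltr0n expn_gt0.
have E2 : (2 ^ (2 * q))%:R = F :> R.
  by rewrite /F expnM.
have NE : (2 ^ (4 * q))%:R = F * F :> R.
  by rewrite /F -natrM -expnMn expnM.
have NE2 : (2 ^ (4 * q + 2))%:R = F * F * 4 :> R by rewrite expnD natrM NE.
have P1 : discr_fun 2 (2 ^ (4 * q)) (gammapt (4 * q)) x / (2 ^ (4 * q))%:R
    <= - (1 / 4) * ((2 ^ (4 * q + 2))%:R)^-1 * (4 * q)%:R.
  rewrite DE -[(_ * _) *+ _]mulr_natr NE2 E2 NE natrM.
  apply: (@final_ineq R _ (\sum_(c < q) hh c)%:R) => //.
    by rewrite ler_nat.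
  by rewrite /F -natrX -!natrM -natrD ler_nat.
split => //.
have Hg : forall i : 'I_2, 0 <= (gammapt (4 * q) i : R) < 1.
  have hF : (hh q)%:R < F by rewrite ltr_nat hh_lt.
  have F1 : 1 <= F by rewrite ler1n expn_gt0.
  move=> i; case: (ord2E i) => ->; rewrite ?g0 ?g1 ?E2 ?NE; apply/andP; split.
  - by apply: divr_ge0; [rewrite ler0n | exact: ltW].
  - by rewrite ltr_pdivrMr // mul1r.
  - by apply: divr_ge0; [rewrite ler0n | apply: mulr_ge0; exact: ltW].
  - rewrite ltr_pdivrMr ?mulr_gt0 // mul1r; apply: lt_le_trans hF _.
    by rewrite -[X in X <= _]mulr1 ler_pM2l.
rewrite /star_discr; set S := (X in sup X).
have N0R : 0 < (2 ^ (4 * q))%:R :> R by rewrite ltr0n.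
have hs : has_sup S.
  split.
    exists `|discr_fun 2 (2 ^ (4 * q)) (gammapt (4 * q)) x / (2 ^ (4 * q))%:R|.
    by exists (gammapt (4 * q)).
  exists 1 => r [y [Hy ->]].
  rewrite normf_div normr_nat ler_pdivrMr // mul1r; exact: discr_bound.
have ub := sup_upper_bound hs.
have Hin : S `|discr_fun 2 (2 ^ (4 * q)) (gammapt (4 * q)) x / (2 ^ (4 * q))%:R|.
  by exists (gammapt (4 * q)).
have := ub _ Hin.
have -> : (16 * ln (2 : R))^-1 * (ln (2 ^ (4 * q))%:R / (2 ^ (4 * q))%:R)
    = - (- (1 / 4) * ((2 ^ (4 * q + 2))%:R)^-1 * (4 * q)%:R).
  have l2 : ln (2 : R) != 0 by rewrite gt_eqF // ln_gt0 // ltr1n.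
  have -> : ln ((2 ^ (4 * q))%:R : R) = ln 2 * (4 * q)%:R by rewrite natrX lnXn // mulr_natr.
  rewrite NE2 NE natrM.
  by field; rewrite l2 gt_eqF.
have : - (discr_fun 2 (2 ^ (4 * q)) (gammapt (4 * q)) x / (2 ^ (4 * q))%:R)
   <= `|discr_fun 2 (2 ^ (4 * q)) (gammapt (4 * q)) x / (2 ^ (4 * q))%:R|.
  by rewrite -normrN ler_norm.
move: P1.
set a := discr_fun _ _ _ _ / _; set b := - (1 / 4) * _ * _.
move=> P1 P2 P3; lra.
Qed.
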